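(* For every positive integer $n$, $UQ(\mathrm{OMB}_n)=1$ and $UQC(\mathrm{DOMB}_n)\ge \frac{\log n-3}{2}$.
   Context: For $x\in\{0,1\}^n$, $\mathrm{OMB}_n(x)=k \bmod 2$ where $k$ is the largest index with $x_k=1$ ($k=0$ if $x=0^n$). For $a,b\in\{0,1\}^n$, $\mathrm{DOMB}_n(a,b)=\mathrm{OMB}_n(a\wedge b)$, where $a\wedge b$ is the bitwise AND. $UQ(f)$ is the minimum number of oracle queries (oracle $O_x:|i,b,z\rangle\mapsto|i,b\oplus x_i,z\rangle$) of a quantum query algorithm that on every input outputs $f(x)$ with probability strictly greater than $1/2$. $UQC(g)$ for $g:\{0,1\}^{n_1}\times\{0,1\}^{n_2}\rightarrow\{0,1\}$ is the minimum number of qubits communicated in a two-party (two-way, no prior shared entanglement) quantum communication protocol that on every input outputs $g$ with probability strictly greater than $1/2$. $\log$ is base 2. *)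

(* Defs.v *)
From HB Require Import structures.
From mathcomp Require Import all_boot all_order all_algebra.
From mathcomp Require Import complex.
From mathcomp Require Import reals exp.
Set Implicit Arguments. Unset Strict Implicit. Unset Printing Implicit Defensive.
Import Order.TTheory GRing.Theory Num.Theory.
Local Open Scope ring_scope.

(* x : {ffun 'I_n -> bool} encodes x_1 ... x_n with x_k = x (k-1). *)
Definition omb (n : nat) (x : {ffun 'I_n -> bool}) : bool :=
  odd (\max_(i < n | x i) i.+1).

Definition domb (n : nat) (a b : {ffun 'I_n -> bool}) : bool :=
  omb [ffun i => a i && b i].

Section Quantum.
Variable R : realType.
Local Notation C := R[i].

Definition op (X : finType) := X -> X -> C.
Definition vec (X : finType) := X -> C.

Definition apply (X : finType) (G : op X) (v : vec X) : vec X :=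
  fun x => \sum_y G x y * v y.

Definition sqmod (z : C) : R := complex.Re z ^+ 2 + complex.Im z ^+ 2.
Definition norm2 (X : finType) (v : vec X) : R := \sum_x sqmod (v x).

Definition unitary (X : finType) (G : op X) : Prop :=
  forall x z, \sum_y (G y x)^* * G y z = (x == z)%:R.

Definition projector (X : finType) (P : op X) : Prop :=
  (forall x y, P x y = (P y x)^*) /\ (forall x z, \sum_y P x y * P y z = P x z).

(* basis |i, b, z> : query index i, answer bit b, workspace z (dimension w.+1) *)
Definition QI (n w : nat) := ('I_n * bool * 'I_w.+1)%type.

Definition oracle n w (x : {ffun 'I_n -> bool}) : op (QI n w) :=
  fun u v => ((u.1.1 == v.1.1) && (u.1.2 == v.1.2 (+) x v.1.1) && (u.2 == v.2))%:R.

Fixpoint qstate n w (U : nat -> op (QI n w)) (x : {ffun 'I_n -> bool})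
    (psi0 : vec (QI n w)) (t : nat) : vec (QI n w) :=
  match t with
  | 0 => apply (U 0%N) psi0
  | t'.+1 => apply (U t) (apply (@oracle n w x) (qstate U x psi0 t'))
  end.

Definition ue_query (n : nat) (f : {ffun 'I_n -> bool} -> bool) (T : nat) : Prop :=
  exists (w : nat) (psi0 : vec (QI n w))
         (U : nat -> op (QI n w)) (P : op (QI n w)),
    [/\ norm2 psi0 = 1, (forall t, (t <= T)%N -> unitary (U t)), projector P &
     forall x, let p := norm2 (apply P (qstate U x psi0 T)) in
       if f x then 1 / 2 < p else 1 / 2 < 1 - p].

Definition UQ_is (n : nat) (f : {ffun 'I_n -> bool} -> bool) (k : nat) : Prop :=
  ue_query f k /\ forall t, ue_query f t -> (k <= t)%N.

(* Global space: C^{pA+1} (Alice private) (x) (C^2)^{(x)N} (message qubits)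
   (x) C^{pB+1} (Bob private).  At cut j, Alice owns her private register and
   qubits with index < j, Bob owns qubits with index >= j and his private
   register. *)
Definition CI (pA N pB : nat) := ('I_pA.+1 * {ffun 'I_N -> bool} * 'I_pB.+1)%type.

Section Comm.
Variables pA N pB : nat.
Local Notation X := (CI pA N pB).

Definition alice_part (j : nat) (u : X) : X :=
  (u.1.1, [ffun i : 'I_N => ((i < j)%N && u.1.2 i)], ord0).
Definition bob_part (j : nat) (u : X) : X :=
  (ord0, [ffun i : 'I_N => ((j <= i)%N && u.1.2 i)], u.2).

(* U (x) I_Bob, for U given on Alice's part *)
Definition liftA (j : nat) (U : op X) : op X :=
  fun u v => if bob_part j u == bob_part j v
             then U (alice_part j u) (alice_part j v) else 0.
(* I_Alice (x) V *)
Definition liftB (j : nat) (V : op X) : op X :=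
  fun u v => if alice_part j u == alice_part j v
             then V (bob_part j u) (bob_part j v) else 0.

Definition lift (alice : bool) (j : nat) (U : op X) : op X :=
  if alice then liftA j U else liftB j U.

(* cut position: each step the sender (s t = true: Alice) sends one qubit *)
Fixpoint cut (j0 : nat) (s : nat -> bool) (t : nat) : nat :=
  match t with
  | 0 => j0
  | t'.+1 => if s t' then (cut j0 s t').-1 else (cut j0 s t').+1
  end.

Definition init_state : vec X :=
  fun u => ((u.1.1 == ord0) && (u.1.2 == [ffun => false]) && (u.2 == ord0))%:R.

(* step t: the sender applies a local unitary on its current registers,
   then sends one qubit to the other party *)
Fixpoint cstate (j0 : nat) (s : nat -> bool) (UA UB : nat -> op X) (t : nat) : vec X :=
  match t with
  | 0 => init_state
  | t'.+1 => apply (lift (s t') (cut j0 s t') (if s t' then UA t' else UB t'))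
                   (cstate j0 s UA UB t')
  end.
End Comm.

(* g has an unbounded-error quantum protocol (no prior entanglement)
   communicating c qubits in total *)
Definition ue_comm (n1 n2 : nat)
    (g : {ffun 'I_n1 -> bool} -> {ffun 'I_n2 -> bool} -> bool) (c : nat) : Prop :=
  exists (pA N pB j0 : nat) (s : nat -> bool)
         (UA : {ffun 'I_n1 -> bool} -> nat -> op (CI pA N pB))
         (UB : {ffun 'I_n2 -> bool} -> nat -> op (CI pA N pB))
         (o : bool)
         (PA : {ffun 'I_n1 -> bool} -> op (CI pA N pB))
         (PB : {ffun 'I_n2 -> bool} -> op (CI pA N pB)),
    (j0 <= N)%N /\
     (forall t, (t < c)%N ->
        if s t then (0 < cut j0 s t)%N else (cut j0 s t < N)%N) /\
     (forall a t, (t < c)%N -> s t -> unitary (liftA (cut j0 s t) (UA a t))) /\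
     (forall b t, (t < c)%N -> ~~ s t -> unitary (liftB (cut j0 s t) (UB b t))) /\
     (forall a, o -> projector (liftA (cut j0 s c) (PA a))) /\
     (forall b, ~~ o -> projector (liftB (cut j0 s c) (PB b))) /\
     forall a b,
       let P := lift o (cut j0 s c) (if o then PA a else PB b) in
       let p := norm2 (apply P (cstate j0 s (UA a) (UB b) c)) in
       if g a b then 1 / 2 < p else 1 / 2 < 1 - p.

Definition UQC_ge (n1 n2 : nat)
    (g : {ffun 'I_n1 -> bool} -> {ffun 'I_n2 -> bool} -> bool) (r : R) : Prop :=
  forall c, ue_comm g c -> r <= c%:R.

End Quantum.

Definition log2 (R : realType) (x : R) : R := ln x / ln 2.

(* Main.v *)
Require Import Defs.
From HB Require Import structures.
From mathcomp Require Import all_boot all_order all_algebra.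
From mathcomp Require Import complex.
From mathcomp Require Import reals exp boolp.
From mathcomp Require Import zify ring lra.
Set Implicit Arguments. Unset Strict Implicit. Unset Printing Implicit Defensive.
Import Order.TTheory GRing.Theory Num.Theory.
Local Open Scope ring_scope.

Section Split.
Variables pA N pB : nat.
Local Notation X := (CI pA N pB).

Definition mrg (j : nat) (w z : X) : X :=
  (w.1.1, [ffun i : 'I_N => if (i < j)%N then w.1.2 i else z.1.2 i], z.2).

Lemma ap_mrg j (w z : X) : alice_part j (mrg j w z) = alice_part j w.
Proof.
rewrite /alice_part /mrg /=; congr (_, _, _); apply/ffunP => i; rewrite !ffunE.
by case: ifP.
Qed.

Lemma bp_mrg j (w z : X) : bob_part j (mrg j w z) = bob_part j z.
Proof.
rewrite /bob_part /mrg /=; congr (_, _, _); apply/ffunP => i; rewrite !ffunE.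
by case: ltnP.
Qed.

Lemma mrg_apbp j (u : X) : mrg j (alice_part j u) (bob_part j u) = u.
Proof.
case: u => [[u1 u2] u3]; rewrite /alice_part /bob_part /mrg /=; congr (_, _, _).
apply/ffunP => i; rewrite !ffunE; by case: ltnP.
Qed.

Lemma ap_ap j (u : X) : alice_part j (alice_part j u) = alice_part j u.
Proof.
rewrite /alice_part /=; congr (_, _, _); apply/ffunP => i; rewrite !ffunE.
by case: ltnP.
Qed.

Lemma bp_bp j (u : X) : bob_part j (bob_part j u) = bob_part j u.
Proof.
rewrite /bob_part /=; congr (_, _, _); apply/ffunP => i; rewrite !ffunE.
by case: ltnP.
Qed.

Lemma sum_split (V : nmodType) j (F : X -> X -> V) :
  \sum_u F (alice_part j u) (bob_part j u) =
  \sum_(w | alice_part j w == w) \sum_(z | bob_part j z == z) F w z.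
Proof.
rewrite pair_big /=.
rewrite (reindex (fun u => (alice_part j u, bob_part j u))) /=.
  apply: eq_bigl => u; by rewrite ap_ap bp_bp !eqxx.
exists (fun p => mrg j p.1 p.2) => [u _|[w z]] /=; first by rewrite mrg_apbp.
rewrite inE /= => /andP[/eqP Hw /eqP Hz].
by rewrite ap_mrg bp_mrg Hw Hz.
Qed.

End Split.

Section Decomp.
Variable R : realType.
Local Notation C := R[i].
Variables pA N pB : nat.
Local Notation X := (CI pA N pB).

Definition decomp (j : nat) (K : finType) (f g : K -> X -> C) (psi : X -> C) :=
  forall u, psi u = \sum_k f k (alice_part j u) * g k (bob_part j u).

Lemma decomp_liftA j (K : finType) (f g : K -> X -> C) psi (U : op R X) :
  decomp j f g psi ->
  decomp j (fun k w => \sum_(w' | alice_part j w' == w') U w w' * f k w') g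
    (apply (liftA j U) psi).
Proof.
move=> H u; rewrite /apply.
pose F := (fun w z => (if bob_part j u == z then U (alice_part j u) w else 0) *
   \sum_k f k w * g k z).
transitivity (\sum_v F (alice_part j v) (bob_part j v)).
  by apply: eq_bigr => v _; rewrite H /liftA.
rewrite sum_split /F.
transitivity (\sum_(w | alice_part j w == w) U (alice_part j u) w * \sum_k f k w * g k (bob_part j u)).
  apply: eq_bigr => w _.
  rewrite (bigD1 (bob_part j u)) /=; last by rewrite bp_bp.
  rewrite eqxx [X in _ + X]big1 ?addr0 // => z /andP[_ Hz].
  by rewrite eq_sym (negbTE Hz) mul0r.
rewrite (eq_bigr (fun w => \sum_k U (alice_part j u) w * (f k w * g k (bob_part j u)))); last first.
  by move=> w _; rewrite mulr_sumr.
rewrite exchange_big /=; apply: eq_bigr => k _.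
rewrite mulr_suml; apply: eq_bigr => w _.
by rewrite mulrA.
Qed.

Lemma decomp_liftB j (K : finType) (f g : K -> X -> C) psi (V : op R X) :
  decomp j f g psi ->
  decomp j f (fun k z => \sum_(z' | bob_part j z' == z') V z z' * g k z')
    (apply (liftB j V) psi).
Proof.
move=> H u; rewrite /apply.
pose F := (fun w z => (if alice_part j u == w then V (bob_part j u) z else 0) *
   \sum_k f k w * g k z).
transitivity (\sum_v F (alice_part j v) (bob_part j v)).
  by apply: eq_bigr => v _; rewrite H /liftB.
rewrite sum_split /F.
rewrite (bigD1 (alice_part j u)) /=; last by rewrite ap_ap.
rewrite eqxx [X in _ + X]big1 ?addr0; last first.
  move=> w /andP[_ Hw]; apply: big1 => z _.
  by rewrite eq_sym (negbTE Hw) mul0r.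
transitivity (\sum_(z | bob_part j z == z) \sum_k f k (alice_part j u) * (V (bob_part j u) z * g k z)).
  apply: eq_bigr => z _; rewrite mulr_sumr; apply: eq_bigr => k _.
  by rewrite mulrCA.
rewrite exchange_big /=; apply: eq_bigr => k _.
by rewrite mulr_sumr.
Qed.

End Decomp.

Section Shift.
Variables pA N pB : nat.
Local Notation X := (CI pA N pB).

Definition setb (m : nat) (w : X) (q : bool) : X :=
  (w.1.1, [ffun i : 'I_N => w.1.2 i || ((i == m :> nat) && q)], w.2).
Definition qb (m : nat) (w : X) : bool := [exists i : 'I_N, (i == m :> nat) && w.1.2 i].

Lemma qb_at m (w : X) (i : 'I_N) : (i == m :> nat) -> qb m w = w.1.2 i.
Proof.
move=> /eqP Hi; apply/existsP/idP => [[i' /andP[/eqP Hi' H]]|H].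
  by have -> : i = i' by apply: val_inj; rewrite /= Hi Hi'.
by exists i; rewrite Hi eqxx.
Qed.

Lemma qb_bpA j (u : X) : qb j.-1 (bob_part j.-1 u) = qb j.-1 u.
Proof.
apply: eq_existsb => i; rewrite /bob_part /= ffunE.
by case: eqP => //= ->; rewrite leqnn.
Qed.

Lemma bp_bpA j (u : X) : bob_part j (bob_part j.-1 u) = bob_part j u.
Proof.
rewrite /bob_part /=; congr (_, _, _); apply/ffunP => i; rewrite !ffunE.
case: (leqP j i) => //= Hji; have -> : (j.-1 <= i)%N by lia. by [].
Qed.

Lemma ap_setbA j (u : X) :
  alice_part j (setb j.-1 (alice_part j.-1 u) (qb j.-1 u)) = alice_part j u.
Proof.
rewrite /alice_part /setb /=; congr (_, _, _); apply/ffunP => i; rewrite !ffunE.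
case: (boolP (i == j.-1 :> nat)) => Hi.
  rewrite (qb_at _ Hi) (eqP Hi) ltnn /=.
  by case: (ltnP j.-1 j).
have -> : (i < j)%N = (i < j.-1)%N by apply/idP/idP; move/eqP: Hi; lia.
by case: (i < j.-1)%N; case: (u.1.2 i).
Qed.

Lemma qb_apB j (u : X) : qb j (alice_part j.+1 u) = qb j u.
Proof.
apply: eq_existsb => i; rewrite /alice_part /= ffunE.
by case: eqP => //= ->; rewrite ltnSn.
Qed.

Lemma ap_apB j (u : X) : alice_part j (alice_part j.+1 u) = alice_part j u.
Proof.
rewrite /alice_part /=; congr (_, _, _); apply/ffunP => i; rewrite !ffunE.
case: (ltnP i j) => //= Hji; have -> : (i < j.+1)%N by lia. by [].
Qed.

Lemma bp_setbB j (u : X) :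
  bob_part j (setb j (bob_part j.+1 u) (qb j u)) = bob_part j u.
Proof.
rewrite /bob_part /setb /=; congr (_, _, _); apply/ffunP => i; rewrite !ffunE.
case: (boolP (i == j :> nat)) => Hi.
  by rewrite (qb_at _ Hi) (eqP Hi) leqnn ltnn /=.
move/eqP: Hi => Hi.
by case: (u.1.2 i); rewrite /= ?andbT ?andbF ?orbF //; apply/idP/idP; lia.
Qed.

Definition u0 : X := (ord0, [ffun => false], ord0).

Lemma u0_split j (u : X) : (u == u0) = (alice_part j u == u0) && (bob_part j u == u0).
Proof.
apply/eqP/andP => [->|[/eqP Ha /eqP Hb]].
  split; apply/eqP; rewrite /alice_part /bob_part /u0 /=; congr (_, _, _);
   apply/ffunP => i; rewrite !ffunE; by rewrite andbF.
rewrite -(mrg_apbp j u) Ha Hb /mrg /u0 /=; congr (_, _, _).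
by apply/ffunP => i; rewrite !ffunE; case: ifP.
Qed.

End Shift.

Section DecompShift.
Variable R : realType.
Local Notation C := R[i].
Variables pA N pB : nat.
Local Notation X := (CI pA N pB).

Definition shA_f j (K : finType) (f : K -> X -> C) : K * bool -> X -> C :=
  fun p w => f p.1 (alice_part j (setb j.-1 w p.2)).
Definition shA_g j (K : finType) (g : K -> X -> C) : K * bool -> X -> C :=
  fun p z => (qb j.-1 z == p.2)%:R * g p.1 (bob_part j z).
Definition shB_f j (K : finType) (f : K -> X -> C) : K * bool -> X -> C :=
  fun p w => (qb j w == p.2)%:R * f p.1 (alice_part j w).
Definition shB_g j (K : finType) (g : K -> X -> C) : K * bool -> X -> C :=
  fun p z => g p.1 (bob_part j (setb j z p.2)).

Lemma decomp_shA j (K : finType) (f g : K -> X -> C) psi :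
  decomp j f g psi -> decomp j.-1 (shA_f j f) (shA_g j g) psi.
Proof.
move=> H u; rewrite H -(pair_bigA _ (fun k q => shA_f j f (k, q) _ * shA_g j g (k, q) _)) /=.
apply: eq_bigr => k _; rewrite big_bool /shA_f /shA_g /= qb_bpA bp_bpA.
rewrite -(ap_setbA j u).
by case: (qb j.-1 u); rewrite /= ?mulr1 ?mul1r ?mul0r ?mulr0 ?addr0 ?add0r.
Qed.

Lemma decomp_shB j (K : finType) (f g : K -> X -> C) psi :
  decomp j f g psi -> decomp j.+1 (shB_f j f) (shB_g j g) psi.
Proof.
move=> H u; rewrite H -(pair_bigA _ (fun k q => shB_f j f (k, q) _ * shB_g j g (k, q) _)) /=.
apply: eq_bigr => k _; rewrite big_bool /shB_f /shB_g /= qb_apB ap_apB.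
rewrite -(bp_setbB j u).
by case: (qb j u); rewrite /= ?mulr1 ?mul1r ?mul0r ?mulr0 ?addr0 ?add0r.
Qed.

Lemma decomp_init j :
  decomp j (fun (_ : unit) w => ((w == @u0 pA N pB)%:R : C) ) (fun _ z => ((z == @u0 pA N pB)%:R : C))
   (@init_state R pA N pB).
Proof.
move=> u; rewrite (big_pred1 tt) //=.
have -> : @init_state R pA N pB u = (u == @u0 pA N pB)%:R by [].
rewrite (u0_split j).
by case: (_ == _); case: (_ == _); rewrite /= ?mulr1 ?mul1r ?mul0r ?mulr0.
Qed.

End DecompShift.

Lemma omb_pred1 n (x : {ffun 'I_n -> bool}) (i0 : 'I_n) :
  x =1 pred1 i0 -> omb x = odd i0.+1.
Proof. by move=> H; rewrite /omb (big_pred1 i0). Qed.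

Lemma omb_pred0 n (x : {ffun 'I_n -> bool}) :
  x =1 xpred0 -> omb x = false.
Proof. by move=> H; rewrite /omb big_pred0. Qed.

Lemma half_lt n k : (k < n.+1./2)%N -> (k.*2 < n)%N.
Proof.
move=> H; have := odd_double_half n.+1; move: H.
rewrite -!muln2; case: (odd n.+1); lia.
Qed.

Lemma signrank (R : realType) n (M : finType)
  (F : {ffun 'I_n -> bool} -> M -> R) (G : {ffun 'I_n -> bool} -> M -> R) :
  (forall a b, let p := \sum_m F a m * G b m in
     if domb a b then 1 / 2 < p else 1 / 2 < 1 - p) ->
  (n.+1./2 <= #|M|.+1)%N.
Proof.
move=> Hs; rewrite leqNgt; apply/negP => Hlt.
set d := n.+1./2 in Hlt.
set r := #|M|.
have Hk : forall k : 'I_d, (k.*2 < n)%N by move=> k; apply: half_lt; exact: ltn_ord.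
pose bk (k : 'I_d) : {ffun 'I_n -> bool} := [ffun i : 'I_n => i == k.*2 :> nat].
pose Gm : 'M[R]_(d, r) := \matrix_(k, c) G (bk k) (enum_val c).
pose Mx := row_mx Gm (const_mx (- (1/2)) : 'M[R]_(d, 1)).
have Hrk : (0 < \rank (kermx Mx))%N.
  rewrite mxrank_ker; have := rank_leq_col Mx; lia.
have : kermx Mx != 0.
  by apply: contraTneq Hrk => ->; rewrite mxrank0.
case/matrix0Pn => i [j Hij].
pose u := row i (kermx Mx).
have Hu : u *m Mx = 0 by rewrite /u -row_mul mulmx_ker row0.
pose a : {ffun 'I_n -> bool} := [ffun i' : 'I_n => [exists k : 'I_d, (i' == k.*2 :> nat) && (0 < u 0 k)]].
pose xa := col_mx (\col_(c < r) F a (enum_val c)) (const_mx 1 : 'M[R]_(1, 1)).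
pose p k := \sum_m F a m * G (bk k) m.
have Hval : forall k, (Mx *m xa) k 0 = p k - 1 / 2.
  move=> k; rewrite /Mx /xa mul_row_col mxE [X in _ + X]mxE big_ord1 !mxE mulr1.
  congr (_ - _); rewrite /p (reindex (fun c : 'I_r => enum_val c)) /=; last exact: onW_bij _ (enum_val_bij M).
  by apply: eq_bigr => c _; rewrite !mxE mulrC.
have H0 : \sum_k u 0 k * (p k - 1 / 2) = 0.
  have E : (u *m (Mx *m xa)) 0 0 = 0 by rewrite mulmxA Hu mul0mx mxE.
  transitivity ((u *m (Mx *m xa)) 0 0); last exact: E.
  rewrite mxE; apply: eq_bigr => k _; by rewrite Hval.
have Hdomb : forall k, domb a (bk k) = (0 < u 0 k).
  move=> k; rewrite /domb.
  case: (boolP (0 < u 0 k)) => Hpos.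
    rewrite (@omb_pred1 _ _ (Ordinal (Hk k))) /=; first by rewrite odd_double.
    move=> i'; rewrite /= !ffunE.
    apply/andP/idP => [[_ /eqP H]|/eqP Hi'].
      by apply/eqP; apply: val_inj.
    rewrite Hi'.
    split; last by rewrite /= eqxx.
    by apply/existsP; exists k; rewrite /= eqxx Hpos.
  apply: omb_pred0 => i'; rewrite /= !ffunE.
  apply/negbTE; apply/negP => /andP[/existsP[k' /andP[/eqP E1 Hp]] /eqP E2].
  have Ekk : k' = k by apply: val_inj; move: E1 E2 => /= ->; rewrite -!muln2; lia.
  by move: Hpos; rewrite -Ekk Hp.
have Hterm : forall k, 0 <= u 0 k * (p k - 1 / 2) /\ (u 0 k != 0 -> 0 < u 0 k * (p k - 1 / 2)).
  move=> k; have := Hs a (bk k); rewrite Hdomb /= -/(p k).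
  case: (ltrP 0 (u 0 k)) => Hu0 Hp.
    have Hp' : 0 < p k - 1 / 2 by lra.
    split; first by apply: mulr_ge0; [exact: ltW | exact: ltW].
    by move=> _; apply: mulr_gt0.
  have Hp' : p k - 1 / 2 < 0 by lra.
  split; first by apply: mulr_le0 => //; exact: ltW.
  move=> Hne; rewrite nmulr_lgt0 //.
  by rewrite lt_neqAle Hne Hu0.
have : 0 < \sum_k u 0 k * (p k - 1 / 2).
  rewrite (bigD1 j) //=; apply: ltr_pwDl.
    by apply: (Hterm j).2; rewrite /u mxE.
  by apply: sumr_ge0 => k _; exact: (Hterm k).1.
by rewrite H0 ltxx.
Qed.

Section Norm.
Variable R : realType.
Local Notation C := R[i].
Variables pA N pB : nat.
Local Notation X := (CI pA N pB).

Lemma Re_sum (I : finType) (Fn : I -> C) : complex.Re (\sum_i Fn i) = \sum_i complex.Re (Fn i).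
Proof.
apply: (big_morph (@complex.Re R)) => // x y.
by case: x => ? ?; case: y.
Qed.

Definition Aw j (K : finType) (f : K -> X -> C) k l :=
  \sum_(w | alice_part j w == w) f k w * (f l w)^*.
Definition Bz j (K : finType) (g : K -> X -> C) k l :=
  \sum_(z | bob_part j z == z) g k z * (g l z)^*.
Definition FF j (K : finType) (f : K -> X -> C) (p : K * K * bool) : R :=
  if p.2 then complex.Re (Aw j f p.1.1 p.1.2) else complex.Im (Aw j f p.1.1 p.1.2).
Definition GG j (K : finType) (g : K -> X -> C) (p : K * K * bool) : R :=
  if p.2 then complex.Re (Bz j g p.1.1 p.1.2) else - complex.Im (Bz j g p.1.1 p.1.2).

Lemma norm2_decomp j (K : finType) (f g : K -> X -> C) psi :
  decomp j f g psi -> norm2 psi = \sum_p FF j f p * GG j g p.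
Proof.
move=> H.
transitivity (complex.Re (\sum_u psi u * (psi u)^*)).
  rewrite Re_sum; apply: eq_bigr => u _.
  by case: (psi u) => x y; rewrite /sqmod /=; ring.
rewrite (eq_bigr (fun u => \sum_k \sum_l (f k (alice_part j u) * (f l (alice_part j u))^*) *
     (g k (bob_part j u) * (g l (bob_part j u))^*))); last first.
  move=> u _; rewrite H rmorph_sum mulr_suml; apply: eq_bigr => k _.
  rewrite mulr_sumr; apply: eq_bigr => l _; rewrite rmorphM; ring.
rewrite exchange_big /=.
rewrite (eq_bigr (fun k => \sum_l Aw j f k l * Bz j g k l)); last first.
  move=> k _; rewrite exchange_big /=; apply: eq_bigr => l _.
  pose F' := fun w z => (f k w * (f l w)^*) * (g k z * (g l z)^*).
  transitivity (\sum_u F' (alice_part j u) (bob_part j u)); first by [].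
  rewrite sum_split /F' /Aw /Bz mulr_suml; apply: eq_bigr => w _.
  by rewrite mulr_sumr.
rewrite Re_sum (eq_bigr (fun k => \sum_l \sum_b FF j f (k, l, b) * GG j g (k, l, b))); last first.
  move=> k _; rewrite Re_sum; apply: eq_bigr => l _.
  rewrite big_bool /FF /GG /=.
  by case: (Aw j f k l) => ? ?; case: (Bz j g k l) => ? ? /=; ring.
rewrite (eq_bigr (fun k => \sum_p FF j f (k, p.1, p.2) * GG j g (k, p.1, p.2))); last first.
  by move=> k _; rewrite pair_bigA.
rewrite pair_bigA (reindex (fun q : K * K * bool => (q.1.1, (q.1.2, q.2)))) /=.
  by apply: eq_bigr => -[[k l] b].
exists (fun p : K * (K * bool) => (p.1, p.2.1, p.2.2)) => [[[k l] b]|[k [l b]]] //.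
Qed.

End Norm.

Lemma cstate_decomp (R : realType) pA N pB (A B : Type) j0 s
  (UA : A -> nat -> op R (CI pA N pB)) (UB : B -> nat -> op R (CI pA N pB)) t :
  exists (K : finType) (f : A -> K -> CI pA N pB -> R[i]) (g : B -> K -> CI pA N pB -> R[i]),
   (#|K| <= 2 ^ t)%N /\
   forall a b, decomp (cut j0 s t) (f a) (g b) (cstate j0 s (UA a) (UB b) t).
Proof.
elim: t => [|t [K [f [g [Hc H]]]]].
  exists unit, (fun _ _ w => ((w == @u0 pA N pB)%:R : R[i])),
    (fun _ _ z => ((z == @u0 pA N pB)%:R : R[i])); split; first by rewrite card_unit.
  by move=> a b; apply: decomp_init.
case Hs: (s t).
  exists (K * bool)%type,
    (fun a => shA_f (cut j0 s t) (fun k w => \sum_(w' | alice_part (cut j0 s t) w' == w') UA a t w w' * f a k w')),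
    (fun b => shA_g (cut j0 s t) (g b)).
  split; first by rewrite card_prod card_bool expnSr leq_mul2r Hc orbT.
  move=> a b; rewrite /= Hs; apply: decomp_shA; apply: decomp_liftA; exact: H.
exists (K * bool)%type,
  (fun a => shB_f (cut j0 s t) (f a)),
  (fun b => shB_g (cut j0 s t) (fun k z => \sum_(z' | bob_part (cut j0 s t) z' == z') UB b t z z' * g b k z')).
split; first by rewrite card_prod card_bool expnSr leq_mul2r Hc orbT.
move=> a b; rewrite /= Hs; apply: decomp_shB; apply: decomp_liftB; exact: H.
Qed.

Lemma comm_nat (R : realType) n c : ue_comm R (domb (n:=n)) c -> (n <= 8 * 4 ^ c)%N.
Proof.
case=> pA [N [pB [j0 [s [UA [UB [o [PA [PB [_ [_ [_ [_ [_ [_ Hp]]]]]]]]]]]]]]].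
have [K [f [g [Hc H]]]] := cstate_decomp j0 s UA UB c.
pose f' a := if o then (fun k w => \sum_(w' | alice_part (cut j0 s c) w' == w') PA a w w' * f a k w') else f a.
pose g' b := if o then g b else (fun k z => \sum_(z' | bob_part (cut j0 s c) z' == z') PB b z z' * g b k z').
have Hd : forall a b, decomp (cut j0 s c) (f' a) (g' b)
   (apply (Defs.lift o (cut j0 s c) (if o then PA a else PB b)) (cstate j0 s (UA a) (UB b) c)).
  move=> a b; rewrite /f' /g' /Defs.lift; destruct o;
    [apply: decomp_liftA | apply: decomp_liftB]; exact: H.
have Hle : (n.+1./2 <= #|{: K * K * bool}|.+1)%N.
  apply: (@signrank R n _ (fun a p => FF (cut j0 s c) (f' a) p) (fun b p => GG (cut j0 s c) (g' b) p)).
  by move=> a b /=; rewrite -(norm2_decomp (Hd a b)); exact: Hp.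
rewrite card_prod card_prod card_bool in Hle.
have Hkk : (#|K| * #|K| <= 2 ^ c * 2 ^ c)%N by apply: leq_mul.
have H4 : (4 ^ c = 2 ^ c * 2 ^ c)%N by rewrite -expnMn.
have Hpos : (0 < 4 ^ c)%N by rewrite expn_gt0.
have := odd_double_half n.+1; rewrite -!muln2.
move: Hle Hkk; rewrite H4 in Hpos *; case: (odd n.+1); lia.
Qed.

Lemma geo n j : (\sum_(i < n) (if (i < j)%N then 2 ^ i else 0) + 1 = 2 ^ minn n j)%N.
Proof.
elim: n => [|n IH]; first by rewrite big_ord0 min0n.
rewrite big_ord_recr /= -addnA (addnC (if _ then _ else _)) addnA IH.
case: ltnP => H.
  rewrite (minn_idPl H) expnS; lia.
rewrite (minn_idPr (leqW H)); lia.
Qed.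

Definition aterm (R : realType) n (x : {ffun 'I_n -> bool}) (i : 'I_n) : R :=
  if x i then (if odd i then - 2 ^+ i else 2 ^+ i) else 0.

Lemma L_sign (R : realType) n (x : {ffun 'I_n -> bool}) :
  (omb x -> 1 <= \sum_i aterm R x i) /\ (~~ omb x -> \sum_i aterm R x i <= 0).
Proof.
case: (boolP [exists i, x i]) => [/existsP [i1 Hx1]|Hno]; last first.
  have H0 : forall i, x i = false by move=> i; apply/negbTE; move: Hno; rewrite negb_exists => /forallP.
  rewrite omb_pred0 // big1 // => i _; by rewrite /aterm H0.
case: (arg_maxnP (fun i : 'I_n => i.+1) Hx1) => j Hxj Hmax.
have Hm : omb x = odd j.+1.
  rewrite /omb; congr odd; apply/eqP; rewrite eqn_leq; apply/andP; split.
    by apply/bigmax_leqP => i Hi; exact: (Hmax i Hi).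
  by apply: leq_bigmax_cond.
set S := \sum_(i < n) (if (i < j)%N then 2 ^ i else 0)%N.
have HS : (S%:R : R) <= 2 ^+ j - 1.
  have := geo n j; rewrite -/S (minn_idPr (ltnW (ltn_ord j))) => E.
  have -> : (2 ^+ j : R) = ((2 ^ j)%N)%:R by rewrite natrX.
  rewrite -E natrD; lra.
pose c (i : 'I_n) : R := if (i < j)%N then 2 ^+ i else 0.
have Hc : forall i, i != j -> - c i <= aterm R x i /\ aterm R x i <= c i.
  move=> i Hij; rewrite /aterm /c.
  have H2 : (0 : R) <= 2 ^+ i by apply: exprn_ge0.
  case: (boolP (x i)) => Hxi.
    have Hij' : (i < j)%N.
      have H1 : (i <= j)%N by exact: (Hmax i Hxi).
      move: H1; rewrite leq_eqVlt => /orP[/eqP E|//].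
      by move: Hij => /eqP []; apply: val_inj.
    rewrite Hij'; case: (odd i); split; lra.
  case: (i < j)%N; split; lra.
have HS' : (S%:R : R) = \sum_i c i.
  rewrite /S natr_sum; apply: eq_bigr => i _; rewrite /c; case: ifP => _ //.
  by rewrite natrX.
have Hcj : \sum_(i | i != j) c i <= S%:R.
  rewrite HS' [X in _ <= X](bigD1 j) //= lerDr /c ltnn; exact: lexx.
have Hlo : - (S%:R) <= \sum_(i | i != j) aterm R x i.
  apply: le_trans (_ : \sum_(i | i != j) - c i <= _).
    by rewrite sumrN lerN2.
  by apply: ler_sum => i Hij; case: (Hc i Hij).
have Hhi : \sum_(i | i != j) aterm R x i <= S%:R.
  apply: le_trans Hcj.
  by apply: ler_sum => i Hij; case: (Hc i Hij).
have Ej : aterm R x j = if odd j then - 2 ^+ j else 2 ^+ j by rewrite /aterm Hxj.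
rewrite (bigD1 j) //= Ej Hm /=.
case: (odd j) => /=; split => // _.
  lra.
lra.
Qed.

Section UQ.
Variable R : realType.
Local Notation C := R[i].
Variable n : nat.
Hypothesis n_gt0 : (0 < n)%N.
Local Notation X := (QI n 2).

Definition yy : R := 1 / n%:R.
Definition kk : R := yy / (4 * 2 ^+ n).
Definition alpha (i : 'I_n) : R := kk * 2 ^+ i.
Definition c0 : R := (1 / 2 - kk / 2) * yy.
Definition beta (i : 'I_n) : R := if odd i then c0 - alpha i else c0.
Definition gamma (i : 'I_n) : R := yy - alpha i - beta i.
Definition wt (i : 'I_n) (z : 'I_3) : R :=
  if (z == 0 :> nat) then alpha i else if (z == 1 :> nat) then beta i else gamma i.
Definition psi0 (u : X) : C := if u.1.2 then 0 else ((Num.sqrt (wt u.1.1 u.2))%:C)%C.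
Definition Uid : op R X := fun u v => (u == v)%:R.
Definition inS (u : X) : bool := ((u.2 == 0 :> nat) && (u.1.2 == ~~ odd u.1.1)) || (u.2 == 1 :> nat).
Definition Pm : op R X := fun u v => ((u == v) && inS u)%:R.

Lemma yy_gt0 : 0 < yy.
Proof. by rewrite /yy divr_gt0 // ltr0n. Qed.
Lemma yy_le1 : yy <= 1.
Proof. rewrite /yy ler_pdivrMr ?ltr0n // mul1r ler1n; lia. Qed.
Lemma kk_gt0 : 0 < kk.
Proof. rewrite /kk divr_gt0 ?yy_gt0 // mulr_gt0 // exprn_gt0 //. Qed.

Lemma alpha_bound i : 0 <= alpha i /\ alpha i <= yy / 4.
Proof.
rewrite /alpha /kk; split; first by rewrite mulr_ge0 ?exprn_ge0 // ltW ?kk_gt0.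
have H2 : (2 ^+ i : R) <= 2 ^+ n by rewrite ler_eXn2l // ?ltr1n //; exact: ltnW (ltn_ord i).
have H2p : (0 : R) < 2 ^+ n by rewrite exprn_gt0.
have E : kk * 2 ^+ n = yy / 4.
  by rewrite /kk; field; rewrite gt_eqF.
rewrite -/kk -E; apply: ler_wpM2l => //; exact: ltW kk_gt0.
Qed.

Lemma kk_le : kk <= 1 / 4.
Proof.
rewrite /kk ler_pdivrMr ?mulr_gt0 ?exprn_gt0 //.
have H1 : (1 : R) <= 2 ^+ n by rewrite exprn_ege1 // ler1n.
have := yy_le1; nra.
Qed.

Lemma wt_ge0 i z : 0 <= wt i z.
Proof.
have [H1 H2] := alpha_bound i; have := kk_le; have := kk_gt0; have := yy_gt0.
rewrite /wt /gamma /beta /c0; case: (z == 0 :> nat); case: (z == 1 :> nat); case: (odd i); nra.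
Qed.

Lemma wt_sum i : \sum_(z < 3) wt i z = yy.
Proof. rewrite !big_ord_recl big_ord0 /wt /= /gamma; ring. Qed.


Lemma apply_Uid (v : X -> C) : apply Uid v = v.
Proof.
apply: funext => u; rewrite /apply /Uid (bigD1 u) //= eqxx mul1r big1 ?addr0 // => w.
by rewrite eq_sym => /negbTE ->; rewrite mul0r.
Qed.

Definition flip (x : {ffun 'I_n -> bool}) (u : X) : X := (u.1.1, u.1.2 (+) x u.1.1, u.2).

Lemma apply_O x (v : X -> C) : apply (oracle R x) v = fun u => v (flip x u).
Proof.
apply: funext => u; rewrite /apply /oracle (bigD1 (flip x u)) //=.
rewrite /flip /= addbK !eqxx /= mul1r big1 ?addr0 // => w Hw.
suff -> : ((u.1.1 == w.1.1) && (u.1.2 == w.1.2 (+) x w.1.1) && (u.2 == w.2)) = false by rewrite mul0r.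
apply/negbTE; apply: contra Hw => /andP[/andP[/eqP E1 /eqP E2] /eqP E3].
case: w E1 E2 E3 => [[i b] z] /= <- -> ->.
by rewrite /flip /= addbK.
Qed.

Lemma apply_P (v : X -> C) : apply Pm v = fun u => (inS u)%:R * v u.
Proof.
apply: funext => u; rewrite /apply /Pm (bigD1 u) //= eqxx /= big1 ?addr0 // => w.
by rewrite eq_sym => /negbTE ->; rewrite mul0r.
Qed.

Lemma sumQI (H : X -> R) : \sum_u H u = \sum_(i : 'I_n) \sum_(b : bool) \sum_(z : 'I_3) H (i, b, z).
Proof.
symmetry; rewrite (pair_bigA _ (fun i b => \sum_(z : 'I_3) H (i, b, z))) /=.
rewrite (pair_bigA _ (fun ib (z : 'I_3) => H (ib.1, ib.2, z))) /=.
by apply: eq_bigr => -[[i b] z].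
Qed.

Lemma sqmod_psi0 u : sqmod (psi0 u) = if u.1.2 then 0 else wt u.1.1 u.2.
Proof.
rewrite /psi0; case: u.1.2; first by rewrite /sqmod /=; ring.
by rewrite /sqmod /= sqr_sqrtr ?wt_ge0 //; ring.
Qed.

Lemma sqmod_bool (b : bool) (z : C) : sqmod (b%:R * z) = (b%:R : R) * sqmod z.
Proof. by case: b; rewrite /sqmod /= ?mul1r ?mul0r //; case: z => ? ? /=; ring. Qed.

Lemma norm2_psi0 : norm2 psi0 = 1.
Proof.
rewrite /norm2 sumQI.
rewrite (eq_bigr (fun i => yy)); last first.
  move=> i _; rewrite big_bool /= -(wt_sum i).
  rewrite [X in X + _ = _]big1 ?add0r; last by move=> z _; rewrite sqmod_psi0.
  by apply: eq_bigr => z _; rewrite sqmod_psi0.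
rewrite sumr_const card_ord /yy mul1r -[LHS]mulr_natr mulVf // pnatr_eq0 -lt0n. exact: n_gt0.
Qed.


Lemma per_i (x : {ffun 'I_n -> bool}) i :
  \sum_(b : bool) \sum_(z : 'I_3) ((inS (i, b, z))%:R : R) * (if b (+) x i then 0 else wt i z)
  = c0 + kk * aterm R x i.
Proof.
rewrite big_bool !big_ord_recl !big_ord0 /inS /wt /aterm /beta /alpha /=.
by case: (x i); case: (odd i); rewrite /=; ring.
Qed.

Lemma p_val (x : {ffun 'I_n -> bool}) : norm2 (apply Pm (qstate (fun _ => Uid) x psi0 1)) =
  1 / 2 - kk / 2 + kk * \sum_i aterm R x i.
Proof.
rewrite /= !apply_Uid apply_O apply_P /norm2 sumQI.
rewrite (eq_bigr (fun i => c0 + kk * aterm R x i)); last first.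
  move=> i _; rewrite -per_i; apply: eq_bigr => b _; apply: eq_bigr => z _.
  by rewrite sqmod_bool sqmod_psi0.
rewrite big_split /= sumr_const card_ord -mulr_sumr /c0.
have E : yy * n%:R = 1.
  by rewrite /yy div1r mulVf // pnatr_eq0 -lt0n n_gt0.
by rewrite -[_ *+ n]mulr_natr -mulrA E mulr1.
Qed.

End UQ.

Lemma uq_upper (R : realType) n : (0 < n)%N -> ue_query R (@omb n) 1.
Proof.
move=> Hn.
exists 2, (@psi0 R n), (fun _ => @Uid R n), (@Pm R n); split.
- exact: norm2_psi0.
- move=> t _ u v; rewrite /Uid (bigD1 u) //= eqxx rmorph1 mul1r big1 ?addr0 ?(eq_sym u v) //.
  by move=> y /negbTE ->; rewrite rmorph0 mul0r.
- split.
    move=> u v; rewrite /Pm rmorph_nat; case: (eqVneq u v) => [->|Huv] //.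
  move=> u v; rewrite /Pm (bigD1 u) //= eqxx /= big1 ?addr0; last first.
    by move=> y /negbTE; rewrite eq_sym => ->; rewrite mul0r.
  case: (eqVneq u v) => [->|Huv] /=; first by case: (inS v); rewrite ?mul1r ?mul0r.
  by rewrite mulr0; case: (inS u).
- move=> x /=; rewrite (@p_val R n Hn).
  have Hk := @kk_gt0 R n Hn.
  have [H1 H2] := L_sign R x.
  case: (omb x) H1 H2 => H1 H2.
    have := H1 isT; nra.
  have := H2 isT; nra.
Qed.

Lemma uq_lower (R : realType) n t : (0 < n)%N -> ue_query R (@omb n) t -> (1 <= t)%N.
Proof.
move=> Hn [w [psi [U [P [_ _ _ Hx]]]]].
case: t Hx => // Hx.
pose x0 : {ffun 'I_n -> bool} := [ffun => false].
pose x1 : {ffun 'I_n -> bool} := [ffun i => i == Ordinal Hn].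
have := Hx x0; have := Hx x1.
have -> : omb x0 = false by apply: omb_pred0 => i; rewrite ffunE.
have -> : omb x1 = true by rewrite (@omb_pred1 _ _ (Ordinal Hn)) // => i; rewrite ffunE.
rewrite /=; lra.
Qed.

Unset Implicit Arguments.

Theorem theorem3 (R : realType) (n : nat) : (0 < n)%N ->
  UQ_is R (@omb n) 1 /\
  UQC_ge (domb (n:=n)) ((log2 (n%:R : R) - 3) / 2).
Proof.
move=> Hn; split.
  split; first exact: uq_upper.
  by move=> t; apply: uq_lower.
move=> c Hc.
have Hnat := comm_nat Hc.
set m := (2 * c + 3)%N.
have Hm : (8 * 4 ^ c = 2 ^ m)%N by rewrite /m expnD expnM mulnC.
have Hle : (n%:R : R) <= 2 ^+ m by rewrite -natrX ler_nat -Hm.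
have Hn0 : (0 : R) < n%:R by rewrite ltr0n.
have Hl2 : (0 : R) < ln 2 by apply: ln_gt0; rewrite ltr1n.
have Hln : ln (n%:R : R) <= ln 2 *+ m.
  rewrite -lnXn ?ltr0n //; rewrite ler_ln //; rewrite posrE //; exact: exprn_gt0.
have Hlog : log2 (n%:R : R) <= m%:R.
  by rewrite /log2 ler_pdivrMr // mulr_natl.
have : (m%:R : R) = 2 * c%:R + 3 by rewrite /m natrD natrM.
lra.
Qed.
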